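(* In the setting described in the context, for every $t\in\{0,1,\dots,T\}$ the value function $V^{(t)}_\theta(s)$, viewed as a function of $(\theta,s)$, is Lipschitz with constant $L_V^{(t)}\le 3T^2L_{R_\theta}\bar L_{f_\theta}^{T-t-1}$.
   Context: Transitions $s_{t+1}=f(s_t,a_t)+\zeta_t$ with $\zeta_t\sim p(\zeta)$ i.i.d.; deterministic policy $\pi_\theta$, $\theta\in\Theta\subseteq\mathbb{R}^{d_\Theta}$; $f_\theta(s)=f(s,\pi_\theta(s))$ and $R_\theta(s)=R(s,\pi_\theta(s))$, viewed as functions of $(\theta,s)$. Value functions: $V^{(T)}_\theta\equiv 0$ and $V^{(t)}_\theta(s)=R_\theta(s)+\mathbb{E}_{p(\zeta)}[V^{(t+1)}_\theta(f_\theta(s)+\zeta)]$ for $t=0,\dots,T-1$. $L_h$ denotes a Lipschitz constant (Euclidean norm) of $h$ jointly in $(\theta,s)$, and $\bar L_h=\max\{L_{\nabla h},L_h,1\}$. Standing assumption: $f_\theta,R_\theta$ are Lipschitz and twice continuously differentiable with Lipschitz first derivative. *)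

(* Defs.v *)
From HB Require Import structures.
From mathcomp Require Import all_boot all_order all_algebra.
From mathcomp Require Import all_classical all_reals all_analysis.
Set Implicit Arguments. Unset Strict Implicit. Unset Printing Implicit Defensive.
Import Order.TTheory GRing.Theory Num.Theory.
Import numFieldNormedType.Exports.
Local Open Scope classical_set_scope.
Local Open Scope ring_scope.

Section Defs.
Variable R : realType.

(* Euclidean norm on row vectors R^k (the library's norm on 'rV is the max norm). *)
Definition enorm (k : nat) (v : 'rV[R]_k) : R :=
  Num.sqrt (\sum_(i < k) v ord0 i ^+ 2).

Definition joinfun (d n : nat) (W : Type) (h : 'rV[R]_d -> 'rV[R]_n -> W)
  (z : 'rV[R]_(d + n)) : W := h (lsubmx z) (rsubmx z).

Definition ftheta (d n m : nat) (f : 'rV[R]_n -> 'rV[R]_m -> 'rV[R]_n)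
  (pi : 'rV[R]_d -> 'rV[R]_n -> 'rV[R]_m) (theta : 'rV[R]_d) (s : 'rV[R]_n) :
  'rV[R]_n := f s (pi theta s).
Definition Rtheta (d n m : nat) (r : 'rV[R]_n -> 'rV[R]_m -> R)
  (pi : 'rV[R]_d -> 'rV[R]_n -> 'rV[R]_m) (theta : 'rV[R]_d) (s : 'rV[R]_n) : R :=
  r s (pi theta s).

Definition lip_vec (d n k : nat) (Theta : set 'rV[R]_d)
  (h : 'rV[R]_d -> 'rV[R]_n -> 'rV[R]_k) (L : R) : Prop :=
  forall theta theta' s s', Theta theta -> Theta theta' ->
    enorm (h theta s - h theta' s') <= L * enorm (row_mx theta s - row_mx theta' s').
Definition lip_scal (d n : nat) (Theta : set 'rV[R]_d)
  (h : 'rV[R]_d -> 'rV[R]_n -> R) (L : R) : Prop :=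
  forall theta theta' s s', Theta theta -> Theta theta' ->
    `|h theta s - h theta' s'| <= L * enorm (row_mx theta s - row_mx theta' s').

(* Lg is a Lipschitz constant of the first derivative (Jacobian / gradient,
   operator norm w.r.t. Euclidean norms) of h jointly in (theta, s). *)
Definition grad_lip_vec (d n k : nat) (Theta : set 'rV[R]_d)
  (h : 'rV[R]_d -> 'rV[R]_n -> 'rV[R]_k) (Lg : R) : Prop :=
  forall (z z' v : 'rV[R]_(d + n)), Theta (lsubmx z) -> Theta (lsubmx z') ->
    enorm (derive (joinfun h) z v - derive (joinfun h) z' v)
      <= Lg * enorm (z - z') * enorm v.
Definition grad_lip_scal (d n : nat) (Theta : set 'rV[R]_d)
  (h : 'rV[R]_d -> 'rV[R]_n -> R) (Lg : R) : Prop :=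
  forall (z z' v : 'rV[R]_(d + n)), Theta (lsubmx z) -> Theta (lsubmx z') ->
    `|derive (joinfun h) z v - derive (joinfun h) z' v|
      <= Lg * enorm (z - z') * enorm v.

Definition C2 (p : nat) (W : normedModType R) (H : 'rV[R]_p -> W) : Prop :=
  (forall z, differentiable H z) /\
  (forall v z, differentiable (fun y => derive H y v) z) /\
  (forall v w, continuous (fun y => derive (fun y' => derive H y' v) y w)).

(* Value function with k steps remaining:
   Vrem 0 = 0, Vrem (k+1) theta s = R_theta(s) + E_zeta[Vrem k theta (f_theta(s) + zeta)],
   zeta : Omega -> R^n a random vector with law p, expectation = integral w.r.t. P. *)
Fixpoint Vrem (d n : nat) (dO : measure_display) (Omega : measurableType dO)
  (P : probability Omega R) (zeta : Omega -> 'rV[R]_n)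
  (Rt : 'rV[R]_d -> 'rV[R]_n -> R) (ft : 'rV[R]_d -> 'rV[R]_n -> 'rV[R]_n)
  (k : nat) : 'rV[R]_d -> 'rV[R]_n -> R :=
  match k with
  | 0 => fun _ _ => 0
  | k'.+1 => fun theta s =>
      Rt theta s + Rintegral P setT
        (fun w => Vrem P zeta Rt ft k' theta (ft theta s + zeta w))
  end.

Definition value (d n : nat) (dO : measure_display) (Omega : measurableType dO)
  (P : probability Omega R) (zeta : Omega -> 'rV[R]_n)
  (Rt : 'rV[R]_d -> 'rV[R]_n -> R) (ft : 'rV[R]_d -> 'rV[R]_n -> 'rV[R]_n)
  (T t : nat) : 'rV[R]_d -> 'rV[R]_n -> R :=
  Vrem P zeta Rt ft (T - t).

End Defs.

(* Main.v *)
Require Import Defs.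
From HB Require Import structures.
From mathcomp Require Import all_boot all_order all_algebra.
From mathcomp Require Import all_classical all_reals all_analysis.
From mathcomp Require Import ring lra zify.
Import Order.TTheory GRing.Theory Num.Theory.
Import numFieldNormedType.Exports.
Local Open Scope classical_set_scope.
Local Open Scope ring_scope.
Lemma int_diff_bound (R : realType) (dO : measure_display) (Omega : measurableType dO)
  (P : probability Omega R) (g1 g2 : Omega -> R) (c : R) :
  P.-integrable setT (fun w => (g1 w)%:E) -> P.-integrable setT (fun w => (g2 w)%:E) ->
  (forall w, `|g1 w - g2 w| <= c) ->
  `|Rintegral P setT g1 - Rintegral P setT g2| <= c.
Proof.
move=> i1 i2 hc.
have ic : P.-integrable setT (fun w => c%:E).
  exact: finite_measure_integrable_cst.
have iD : forall g h : Omega -> R, P.-integrable setT (fun w => (g w)%:E) ->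
    P.-integrable setT (fun w => (h w)%:E) ->
    P.-integrable setT (EFin \o (fun w => g w + h w)).
  move=> g h ig ih.
  by apply: eq_integrable (integrableD _ ig ih) => // w _ /=; rewrite EFinD.
have key : forall g h : Omega -> R, P.-integrable setT (fun w => (g w)%:E) ->
    P.-integrable setT (fun w => (h w)%:E) -> (forall w, g w - h w <= c) ->
    Rintegral P setT g - Rintegral P setT h <= c.
  move=> g h ig ih H.
  have -> : c = Rintegral P setT (fun _ => c).
    have h1 : P [set: Omega] = 1%E := probability_setT P.
    rewrite Rintegral_cst // [fine _](_ : _ = 1) ?mulr1 //.
    by transitivity (fine (1%E : \bar R)); [congr fine; exact: h1 | by []].
  rewrite lerBlDl -RintegralD //.
  apply: le_Rintegral => //; first exact: iD.
  by move=> w _; rewrite -lerBlDl.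
rewrite ler_norml; apply/andP; split.
  rewrite lerNl opprB; apply: key => // w.
  by apply: le_trans (hc w); rewrite distrC ler_norm.
by apply: key => // w; apply: le_trans (hc w); rewrite ler_norm.
Qed.

Lemma enorm_sqr (R : realType) k (v : 'rV[R]_k) : enorm v ^+ 2 = \sum_(i < k) v ord0 i ^+ 2.
Proof. by rewrite /enorm sqr_sqrtr // sumr_ge0 // => i _; rewrite sqr_ge0. Qed.

Lemma enorm_ge0 (R : realType) k (v : 'rV[R]_k) : 0 <= enorm v.
Proof. exact: sqrtr_ge0. Qed.

Lemma enorm_row (R : realType) d n (x : 'rV[R]_d) (y : 'rV[R]_n) :
  enorm (row_mx x y) = Num.sqrt (enorm x ^+ 2 + enorm y ^+ 2).
Proof.
rewrite /enorm big_split_ord /=.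
rewrite !sqr_sqrtr ?sumr_ge0 // => [|i _|i _]; rewrite ?sqr_ge0 //.
by congr (Num.sqrt (_ + _)); apply: eq_bigr => i _; rewrite ?row_mxEl ?row_mxEr.
Qed.

Lemma enorm_row_le (R : realType) d n (x : 'rV[R]_d) (y : 'rV[R]_n) :
  enorm (row_mx x y) <= enorm x + enorm y.
Proof.
rewrite enorm_row.
have h : enorm x ^+ 2 + enorm y ^+ 2 <= (enorm x + enorm y) ^+ 2.
  by rewrite sqrrD lerD2r lerDl mulrn_wge0 // mulr_ge0 // enorm_ge0.
apply: le_trans (ler_wsqrtr h) _.
by rewrite sqrtr_sqr ger0_norm // addr_ge0 // enorm_ge0.
Qed.

Lemma enorm_rowl (R : realType) d n (x : 'rV[R]_d) (y : 'rV[R]_n) :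
  enorm x <= enorm (row_mx x y).
Proof.
rewrite enorm_row -{1}(ger0_norm (@enorm_ge0 _ _ x)) -sqrtr_sqr.
by apply: ler_wsqrtr; rewrite lerDl sqr_ge0.
Qed.

Lemma enorm_rowr (R : realType) d n (x : 'rV[R]_d) (y : 'rV[R]_n) :
  enorm y <= enorm (row_mx x y).
Proof.
rewrite enorm_row -{1}(ger0_norm (@enorm_ge0 _ _ y)) -sqrtr_sqr.
by apply: ler_wsqrtr; rewrite lerDr sqr_ge0.
Qed.

Lemma enorm_eq0 (R : realType) k (v : 'rV[R]_k) : enorm v = 0 -> v = 0.
Proof.
move=> h; have : enorm v ^+ 2 = 0 by rewrite h expr0n.
rewrite enorm_sqr => /eqP; rewrite psumr_eq0 => [/allP H|i _]; last exact: sqr_ge0.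
apply/rowP => i; rewrite mxE.
have := H i (mem_index_enum i); rewrite implyTb sqrf_eq0 => /eqP ->.
by [].
Qed.

Theorem lemma2 (R : realType) (d n m : nat)
  (dO : measure_display) (Omega : measurableType dO) (P : probability Omega R)
  (zeta : Omega -> 'rV[R]_n)
  (f : 'rV[R]_n -> 'rV[R]_m -> 'rV[R]_n) (r : 'rV[R]_n -> 'rV[R]_m -> R)
  (pi : 'rV[R]_d -> 'rV[R]_n -> 'rV[R]_m) (Theta : set 'rV[R]_d) (T : nat)
  (Lf LgradF LR LgradR : R) :
  lip_vec Theta (ftheta f pi) Lf ->
  lip_scal Theta (Rtheta r pi) LR ->
  C2 (joinfun (ftheta f pi)) ->
  C2 (joinfun (Rtheta r pi)) ->
  grad_lip_vec Theta (ftheta f pi) LgradF ->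
  grad_lip_scal Theta (Rtheta r pi) LgradR ->
  (* the expectations defining the value functions are well defined *)
  (forall t : nat, (t < T)%N -> forall theta s, Theta theta ->
     P.-integrable setT (fun w =>
       (value P zeta (Rtheta r pi) (ftheta f pi) T t.+1 theta
          (ftheta f pi theta s + zeta w))%:E)) ->
  forall t : nat, (t <= T)%N ->
    lip_scal Theta (value P zeta (Rtheta r pi) (ftheta f pi) T t)
      (3 * (T%:R) ^+ 2 * LR
         * (Num.max LgradF (Num.max Lf 1)) ^ (T%:Z - t%:Z - 1)).
Proof.
move=> hf hR _ _ _ _ hint.
set ft := ftheta f pi; set Rt := Rtheta r pi.
set Lb := Num.max LgradF (Num.max Lf 1).
have Lb1 : 1 <= Lb by rewrite /Lb !le_max lexx !orbT.
have Lb0 : 0 <= Lb by apply: le_trans Lb1.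
have LfLb : Lf <= Lb by rewrite /Lb !le_max lexx !orbT.
set V := Vrem P zeta Rt ft.
pose B k a b := \sum_(j < k) Lb ^+ j * ((j.+1)%:R * a + b).
have rowB : forall (x x' : 'rV[R]_d) (y y' : 'rV[R]_n),
    row_mx x y - row_mx x' y' = row_mx (x - x') (y - y').
  by move=> x x' y y'; rewrite opp_row_mx add_row_mx.
have hI : forall k, (k < T)%N -> forall th s, Theta th ->
    P.-integrable setT (fun w => (V k th (ft th s + zeta w))%:E).
  move=> k kT th s Hth.
  have := hint (T - k.+1)%N _ th s Hth; rewrite /value.
  have -> : (T - (T - k.+1).+1)%N = k by lia.
  by apply; lia.
have claim : 0 <= LR -> forall k, (k <= T)%N -> forall th th' s s', Theta th -> Theta th' ->
    `|V k th s - V k th' s'| <= LR * B k (enorm (th - th')) (enorm (s - s')).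
  move=> LR0; elim=> [|k IH] kT th th' s s' Hth Hth'.
    by rewrite /V /= subrr normr0 /B big_ord0 mulr0.
  set a := enorm (th - th'); set b := enorm (s - s').
  have a0 : 0 <= a by exact: enorm_ge0.
  have b0 : 0 <= b by exact: enorm_ge0.
  have hE : enorm (row_mx th s - row_mx th' s') <= a + b.
    by rewrite rowB; exact: enorm_row_le.
  have E0 : 0 <= enorm (row_mx th s - row_mx th' s') by exact: enorm_ge0.
  set b' := enorm (ft th s - ft th' s').
  have hb' : b' <= Lb * (a + b).
    apply: le_trans (hf _ _ _ _ Hth Hth') _.
    apply: le_trans (ler_wpM2r E0 LfLb) _.
    have := ler_wpM2l Lb0 hE. exact.
  rewrite /V /= -/V opprD addrACA.
  apply: le_trans (ler_normD _ _) _.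
  have h1 : `|Rt th s - Rt th' s'| <= LR * (a + b).
    apply: le_trans (hR _ _ _ _ Hth Hth') _.
    have := ler_wpM2l LR0 hE. exact.
  have h2 : `|Rintegral P setT (fun w => V k th (ft th s + zeta w)) -
              Rintegral P setT (fun w => V k th' (ft th' s' + zeta w))|
            <= LR * B k a b'.
    apply: int_diff_bound; [exact: hI|exact: hI|] => w.
    have := IH (ltnW kT) th th' (ft th s + zeta w) (ft th' s' + zeta w) Hth Hth'.
    by rewrite opprD addrACA subrr addr0.
  have h3 : B k a b' <= B k a (Lb * (a + b)).
    apply: ler_sum => j _; apply: ler_wpM2l; first exact: exprn_ge0.
    by rewrite lerD2l.
  apply: le_trans (lerD h1 (le_trans h2 (ler_wpM2l LR0 h3))) _.
  rewrite -mulrDr; apply: ler_wpM2l => //.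
  rewrite /B big_ord_recl /= expr0 mul1r mul1r lerD2l.
  apply: ler_sum => j _.
  rewrite /bump /= add1n exprSr -mulrA; apply: ler_wpM2l; first exact: exprn_ge0.
  have c0 : 0 <= (j.+1)%:R * a by rewrite mulr_ge0.
  rewrite -addn1 natrD mulrDl mul1r.
  nra.
move=> t tT th th' s s' Hth Hth'.
set E := enorm (row_mx th s - row_mx th' s').
have E0 : 0 <= E by exact: enorm_ge0.
have [E00|Epos] := eqVneq E 0.
  rewrite E00 mulr0; move/enorm_eq0/eqP: E00; rewrite subr_eq0 => /eqP /eq_row_mx [-> ->].
  by rewrite normr_le0 subr_eq0.
have Egt0 : 0 < E by rewrite lt_neqAle eq_sym Epos.
have LR0 : 0 <= LR.
  have := hR th th' s s' Hth Hth'; rewrite -/E => h.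
  by rewrite -(pmulr_lge0 _ Egt0); exact: le_trans (normr_ge0 _) h.
rewrite /value -/V.
have [tE|tlt] := eqVneq t T.
  rewrite tE subnn /V /= subrr normr0.
  by rewrite mulr_ge0 // mulr_ge0 // ?exprz_ge0 // mulr_ge0 // mulr_ge0.
have tT' : (t < T)%N by rewrite ltn_neqAle tlt.
set k := (T - t)%N.
have k1 : (1 <= k)%N by rewrite /k; lia.
have kT : (k <= T)%N by rewrite /k; lia.
have -> : (T%:Z - t%:Z - 1 = (k.-1)%:Z)%R by rewrite /k; lia.
set a := enorm (th - th'); set b := enorm (s - s').
have a0 : 0 <= a by exact: enorm_ge0.
have b0 : 0 <= b by exact: enorm_ge0.
have aE : a <= E by rewrite /E rowB; exact: enorm_rowl.
have bE : b <= E by rewrite /E rowB; exact: enorm_rowr.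
apply: le_trans (claim LR0 k kT th th' s s' Hth Hth') _.
have hB : B k a b <= (Lb ^+ k.-1 * (k%:R * (a + b))) *+ k.
  rewrite /B -[k in _ *+ k]card_ord -sumr_const.
  apply: ler_sum => j _.
  apply: ler_pM; [exact: exprn_ge0| by rewrite addr_ge0 // mulr_ge0 | |].
    by apply: ler_weXn2l => //; have := ltn_ord j; lia.
  rewrite mulrDr lerD //.
    by apply: ler_wpM2r => //; rewrite ler_nat; have := ltn_ord j; lia.
  by rewrite ler_peMl // ler1n.
have hk : (k%:R : R) <= T%:R by rewrite ler_nat.
have k0 : (0 : R) <= k%:R by [].
set L := Lb ^+ k.-1.
have L0 : 0 <= L by exact: exprn_ge0.
rewrite -mulr_natr in hB.
change (Lb ^ (k.-1)%:Z) with L.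
have hB2 : B k a b <= L * (k%:R * k%:R) * (2 * E).
  apply: le_trans hB _.
  have : a + b <= 2 * E by lra.
  move=> hab.
  have : k%:R * (a + b) <= k%:R * (2 * E) by exact: ler_wpM2l.
  move=> h.
  have := ler_wpM2l L0 h; move=> h'.
  have := ler_wpM2r k0 h'. move=> h''.
  apply: le_trans h'' _; rewrite !mulrA; lra.
have hkk : k%:R * k%:R * 2 <= 3 * (T%:R : R) ^+ 2.
  rewrite expr2; have kk : k%:R * k%:R <= (T%:R : R) * T%:R by apply: ler_pM.
  nra.
apply: le_trans (ler_wpM2l LR0 hB2) _.
have : L * (k%:R * k%:R) * (2 * E) <= L * E * (3 * T%:R ^+ 2).
  rewrite [X in X <= _](_ : _ = L * E * (k%:R * k%:R * 2)); last by ring.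
  apply: ler_wpM2l => //; exact: mulr_ge0.
move=> h; apply: le_trans (ler_wpM2l LR0 h) _.
by rewrite le_eqVlt; apply/orP; left; apply/eqP; ring.
Qed.
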